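(* Let $N\ge2$ and suppose $U$ satisfies Assumption (U), $G$ satisfies Assumption (G1) (see context), and $\sum_{i=1}^NU(q_i)+\sum_{1\le i<j\le N}G(q_i-q_j)\ge1$ for all $\mathbf{q}\in\mathcal{D}$. Then there exist positive constants $c_G$ (small) and $C_G$ (large) independent of $\mathbf{q}$ such that for all $\mathbf{q}=(q_1,\dots,q_N)\in\mathcal{D}$, $$C_G\Big[\sum_{i=1}^NU(q_i)+\sum_{1\le i<j\le N}G(q_i-q_j)\Big]\ge\sum_{i=1}^N|q_i|-c_G\sum_{1\le i<j\le N}\log|q_i-q_j|\ge c_G\sum_{i=1}^N|q_i|+c_G\max\{-\log|q_i-q_j|:1\le i<j\le N\}.$$
   Context: $\mathcal{D}=\{\mathbf{q}\in(\mathbb{R}^d)^N:q_i\ne q_j\text{ for }i\ne j\}$. Assumption (U): $U\in C^\infty(\mathbb{R}^d;[1,\infty))$ and there are constants $a_1>0$, $\lambda\ge1$, $a_2,a_3>0$ such that for all $q$: $\frac{1}{a_1}|q|^{\lambda+1}-a_1\le |U(q)|\le a_1(1+|q|^{\lambda+1})$, $|\nabla U(q)|\le a_1(1+|q|^\lambda)$, $\langle\nabla U(q),q\rangle\ge a_2|q|^{\lambda+1}-a_3$. Assumption (G1): $G\in C^\infty(\mathbb{R}^d\setminus\{0\};\mathbb{R})$, $G(q)\to\infty$ as $|q|\to0$, $G$ even, $\nabla G$ odd; there is $\beta_1\ge1$ with $|G(q)|\le a_1(1+|q|+|q|^{-\beta_1})$, $|\nabla G(q)|\le a_1(1+|q|^{-\beta_1})$;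 and constants $\beta_2\in[0,\beta_1)$, $a_4>0$, $a_5\in\mathbb{R}$, $a_6>0$ with $\big|\nabla G(q)+a_4\frac{q}{|q|^{\beta_1+1}}+a_5\frac{q}{|q|^{\beta_2+1}}\big|\le a_6$ for $q\ne0$. *)

(* Defs.v *)
From HB Require Import structures.
From mathcomp Require Import all_boot all_order all_algebra.
From mathcomp Require Import all_classical all_reals all_analysis.
Set Implicit Arguments. Unset Strict Implicit. Unset Printing Implicit Defensive.
Import Order.TTheory GRing.Theory Num.Theory.
Import numFieldNormedType.Exports.
Local Open Scope classical_set_scope.
Local Open Scope ring_scope.

Section Defs.
Variables (R : realType) (d : nat).
Local Notation V := 'rV[R]_d.

Definition edot (p q : V) : R := \sum_(k < d) p 0 k * q 0 k.
Definition enorm (q : V) : R := Num.sqrt (edot q q).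

Fixpoint Ck_on (k : nat) (A : set V) (f : V -> R) : Prop :=
  match k with
  | 0 => forall x, A x -> {for x, continuous f}
  | k.+1 => (forall x, A x -> differentiable f x) /\
            (forall v : V, Ck_on k A (fun x => derive f x v))
  end.

Definition smooth_on (A : set V) (f : V -> R) : Prop := forall k, Ck_on k A f.

Definition grad (f : V -> R) (x : V) : V := \row_(k < d) derive f x (delta_mx 0 k).

End Defs.

(* maximum of f i j over pairs 1 <= i < j <= N (N >= 2); 0 if N < 2 (never used) *)
Definition pair_max (R : realType) (N : nat) : ('I_N -> 'I_N -> R) -> R :=
  match N as n return ('I_n -> 'I_n -> R) -> R with
  | n.+2 => fun f =>
      let m0 := f ord0 (@Ordinal n.+2 1 isT) in
      \big[Num.max/m0]_(i < n.+2) \big[Num.max/m0]_(j < n.+2 | (i < j)%N) f i j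
  | _ => fun _ => 0
  end.

Definition assumption_U (R : realType) (d : nat) (U : 'rV[R]_d -> R)
  (a1 lam a2 a3 : R) : Prop :=
  [/\ smooth_on setT U, (forall q, 1 <= U q) &
      [/\ 0 < a1, 1 <= lam, 0 < a2 & 0 < a3]] /\
  (forall q : 'rV[R]_d,
     [/\ a1^-1 * enorm q `^ (lam + 1) - a1 <= `|U q|,
         `|U q| <= a1 * (1 + enorm q `^ (lam + 1)),
         enorm (grad U q) <= a1 * (1 + enorm q `^ lam) &
         a2 * enorm q `^ (lam + 1) - a3 <= edot (grad U q) q]).

Definition assumption_G1 (R : realType) (d : nat) (G : 'rV[R]_d -> R)
  (a1 b1 b2 a4 a5 a6 : R) : Prop :=
  [/\ smooth_on [set q | q != 0] G,
      G x @[x --> (0 : 'rV[R]_d)^'] --> +oo,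
      (forall q, q != 0 -> G (- q) = G q),
      (forall q, q != 0 -> grad G (- q) = - grad G q) &
      [/\ 0 < a1, 1 <= b1, 0 <= b2 & b2 < b1] /\ 0 < a4 /\ 0 < a6] /\
  (forall q : 'rV[R]_d, q != 0 ->
     [/\ `|G q| <= a1 * (1 + enorm q + enorm q `^ (- b1)),
         enorm (grad G q) <= a1 * (1 + enorm q `^ (- b1)) &
         enorm (grad G q + (a4 * (enorm q `^ (b1 + 1))^-1) *: q
                + (a5 * (enorm q `^ (b2 + 1))^-1) *: q) <= a6]).

Definition config_D (R : realType) (d N : nat) (q : 'I_N -> 'rV[R]_d) : Prop :=
  forall i j : 'I_N, i != j -> q i != q j.

Definition energy (R : realType) (d N : nat) (U G : 'rV[R]_d -> R)
  (q : 'I_N -> 'rV[R]_d) : R :=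
  \sum_(i < N) U (q i) + \sum_(i < N) \sum_(j < N | (i < j)%N) G (q i - q j).

(* Main.v *)
Require Import Defs.
From HB Require Import structures.
From mathcomp Require Import all_boot all_order all_algebra.
From mathcomp Require Import all_classical all_reals all_analysis.
From mathcomp Require Import ring lra.
Import Order.TTheory GRing.Theory Num.Theory.
Import numFieldNormedType.Exports.
Local Open Scope classical_set_scope.
Local Open Scope ring_scope.

Section E.
Context {R : realType} {d : nat}.
Implicit Types p q u w : 'rV[R]_d.

Lemma edot_ge0 q : 0 <= edot q q.
Proof. by apply: sumr_ge0 => k _; rewrite -expr2 sqr_ge0. Qed.

Lemma enorm_ge0 q : 0 <= enorm q.
Proof. exact: sqrtr_ge0. Qed.

Lemma enorm_sq q : enorm q ^+ 2 = edot q q.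
Proof. by rewrite sqr_sqrtr // edot_ge0. Qed.

Lemma edotC p q : edot p q = edot q p.
Proof. by apply: eq_bigr => k _; rewrite mulrC. Qed.

Lemma edotZl k p q : edot (k *: p) q = k * edot p q.
Proof. by rewrite /edot mulr_sumr; apply: eq_bigr => i _; rewrite mxE mulrA. Qed.

Lemma edotDl p p' q : edot (p + p') q = edot p q + edot p' q.
Proof. by rewrite /edot -big_split; apply: eq_bigr => i _; rewrite mxE mulrDl. Qed.

Lemma edotNl p q : edot (- p) q = - edot p q.
Proof. by rewrite /edot -sumrN; apply: eq_bigr => i _; rewrite mxE mulNr. Qed.

Lemma enormZ k q : enorm (k *: q) = `|k| * enorm q.
Proof.
rewrite /enorm edotZl edotC edotZl mulrA -expr2 sqrtrM ?sqr_ge0 //.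
by rewrite sqrtr_sqr.
Qed.

Lemma enorm_gt0 q : q != 0 -> 0 < enorm q.
Proof.
move=> q0; rewrite sqrtr_gt0.
have [k qk] : exists k, q 0 k != 0.
  apply/existsP; apply: contraR q0 => /existsPn H.
  apply/eqP/rowP => k; rewrite mxE; exact/eqP/negbNE/H.
rewrite /edot (bigD1 k) //= ltr_wpDr //.
  by apply: sumr_ge0 => i _; rewrite -expr2 sqr_ge0.
by rewrite -expr2 lt_def sqr_ge0 andbT sqrf_eq0.
Qed.

Lemma edot_le w u a : 0 < a -> enorm w <= a -> enorm u = 1 -> edot w u <= a.
Proof.
move=> a0 hw hu.
have h1 : edot w w <= a ^+ 2.
  rewrite -enorm_sq !expr2; have := enorm_ge0 w; nra.
have h2 : edot u u = 1 by rewrite -enorm_sq hu expr1n.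
have : 2 * a * edot w u <= edot w w + a ^+ 2 * edot u u.
  rewrite /edot mulr_sumr mulr_sumr -big_split /=; apply: ler_sum => k _.
  have := sqr_ge0 (w 0 k - a * u 0 k); nra.
rewrite h2 mulr1 => H.
have H2 : 2 * a * edot w u <= (2 * a) * a by move: H h1; rewrite expr2; nra.
by rewrite -(ler_pM2l (_ : 0 < 2 * a)) ?mulr_gt0 //.
Qed.

Lemma enormB_le p q : enorm (p - q) <= 2 * (enorm p + enorm q).
Proof.
have hp := enorm_ge0 p; have hq := enorm_ge0 q.
rewrite -(ger0_norm (enorm_ge0 _)) -[X in _ <= X]ger0_norm; last nra.
rewrite -ler_sqr ?nnegrE ?normr_ge0 // !real_normK ?num_real //.
rewrite enorm_sq.
have : edot (p - q) (p - q) <= 2 * edot p p + 2 * edot q q.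
  rewrite /edot !mulr_sumr -big_split /=; apply: ler_sum => k _.
  rewrite !mxE; have := sqr_ge0 (p 0 k + q 0 k); nra.
rewrite -!enorm_sq; nra.
Qed.

End E.
Section D.
Context {R : realType} {d : nat}.
Implicit Types p q u w : 'rV[R]_d.

Lemma dir_deriv_edot (G : 'rV[R]_d -> R) x u :
  differentiable G x -> 'D_u G x = edot (grad G x) u.
Proof.
move=> dG; rewrite deriveE // {1}(row_sum_delta u) linear_sum /edot.
apply: eq_bigr => k _; rewrite linearZ /= mxE deriveE // mulrC.
by [].

Qed.

Lemma is_derive_ray (G : 'rV[R]_d -> R) u (t : R) :
  differentiable G (t *: u) ->
  is_derive t 1 (fun s => G (s *: u)) (edot (grad G (t *: u)) u).
Proof.
move=> dG.
have hf : differentiable (fun s : R => s *: u) t by [].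
have hc : differentiable (G \o (fun s : R => s *: u)) t.
  exact: differentiable_comp.
apply: DeriveDef; first exact: diff_derivable.
rewrite deriveE // diff_comp // /= -dir_deriv_edot //.
rewrite deriveE //; congr ('d G _ _).
by rewrite diff_val /= scale1r.
Qed.
End D.
Section P.
Context {R : realType}.

Lemma powR_aux (t b : R) : 0 < t -> 0 <= b -> (t `^ (b + 1))^-1 * t = t `^ (- b).
Proof.
move=> t0 b0; rewrite powRD; last by apply/implyP => _; rewrite gt_eqF.
rewrite powRr1 ?ltW // invfM mulrAC -mulrA mulfV ?gt_eqF // mulr1 powRN //.
Qed.

Lemma powR_split (t b1 b2 : R) : 0 < t ->
  t `^ (- b2) = t `^ (- b1) * t `^ (b1 - b2).
Proof.
move=> t0; rewrite -powRD; last by apply/implyP => _; rewrite gt_eqF.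
by congr (_ `^ _); lra.
Qed.

Lemma powR_ge_inv (t b : R) : 0 < t -> t <= 1 -> 1 <= b -> t^-1 <= t `^ (- b).
Proof.
move=> t0 t1 b1; rewrite -powR_inv1; last exact: ltW.
have h : 0 < t <= 1 by rewrite t0 t1.
have hb : - b <= -1 by lra.
by have := ger_powR h hb.
Qed.

Lemma powR_neg_anti (s t b : R) : 0 < s -> s <= t -> 0 <= b -> t `^ (- b) <= s `^ (- b).
Proof.
move=> s0 st b0; have t0 : 0 < t by exact: lt_le_trans st.
rewrite !powRN lef_pV2 ?posrE ?powR_gt0 //.
have hs : s \in Num.nneg by rewrite nnegrE; exact: ltW.
have ht : t \in Num.nneg by rewrite nnegrE; exact: ltW.
by have := ge0_ler_powR b0 hs ht st.
Qed.

Lemma t0_exists (a4 a5 e : R) : 0 < a4 -> 0 < e ->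
  exists t0, [/\ 0 < t0, t0 <= 1 & forall t, 0 < t -> t <= t0 ->
     `|a5| * t `^ e <= a4 / 2].
Proof.
move=> a40 e0.
set r := a4 / (2 * (`|a5| + 1)).
have r0 : 0 < r by rewrite /r divr_gt0 // mulr_gt0 // ltr_pwDr ?normr_ge0.
exists (Num.min 1 (r `^ e^-1)); split.
- by rewrite lt_min ltr01 powR_gt0.
- by rewrite ge_min lexx.
move=> t t0 tle.
have h1 : t `^ e <= r.
  apply: (@le_trans _ _ ((r `^ e^-1) `^ e)).
    have hs : t \in Num.nneg by rewrite nnegrE; exact: ltW.
    have ht : r `^ e^-1 \in Num.nneg by rewrite nnegrE powR_ge0.
    have tr : t <= r `^ e^-1 by apply: le_trans tle _; rewrite ge_min lexx orbT.
    by have := ge0_ler_powR (ltW e0) hs ht tr.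
  by rewrite -powRrM mulVf ?gt_eqF // powRr1 //; exact: ltW.
have h2 : (`|a5| + 1) * r = a4 / 2.
  rewrite /r; field; rewrite gt_eqF // ltr_pwDr ?normr_ge0 //.
have := normr_ge0 a5; have := powR_ge0 t e; nra.
Qed.
End P.

Section GL.
Variables (R : realType) (d : nat) (G : 'rV[R]_d -> R).
Variables (a1 b1 b2 a4 a5 a6 c : R).
Hypothesis dG : forall x : 'rV[R]_d, x != 0 -> differentiable G x.
Hypothesis Gb : forall q : 'rV[R]_d, q != 0 ->
  `|G q| <= a1 * (1 + enorm q + enorm q `^ (- b1)).
Hypothesis Gg : forall q : 'rV[R]_d, q != 0 ->
  enorm (grad G q + (a4 * (enorm q `^ (b1 + 1))^-1) *: q
                + (a5 * (enorm q `^ (b2 + 1))^-1) *: q) <= a6.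
Hypotheses (a1p : 0 < a1) (b1g : 1 <= b1) (b2g : 0 <= b2) (b21 : b2 < b1)
  (a4p : 0 < a4) (a6p : 0 < a6) (cp : 0 < c) (ca4 : c <= a4 / 2).

Lemma grad_bound (t0 : R) (u : 'rV[R]_d) (t : R) :
  (forall t, 0 < t -> t <= t0 -> `|a5| * t `^ (b1 - b2) <= a4 / 2) ->
  t0 <= 1 -> enorm u = 1 -> 0 < t -> t <= t0 ->
  edot (grad G (t *: u)) u <= - c * t^-1 + a6.
Proof.
move=> ht0 t01 hu tp tt0.
have u0 : u != 0.
  apply/negP => /eqP u0; move: hu; rewrite u0 /enorm /edot big1 => [|k _].
    by rewrite sqrtr0 => /eqP; rewrite eq_sym oner_eq0.
  by rewrite mxE mul0r.
have q0 : t *: u != 0 by rewrite scaler_eq0 negb_or gt_eqF.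
have nq : enorm (t *: u) = t by rewrite enormZ hu mulr1 (gtr0_norm tp).
have := @Gg _ q0; rewrite nq.
set w := (X in enorm X <= _) => hw.
have uu : edot u u = 1 by rewrite -enorm_sq hu expr1n.
have hwu := edot_le _ _ _ a6p hw hu.
have E : grad G (t *: u) = w - (a4 * (t `^ (b1 + 1))^-1) *: (t *: u)
                            - (a5 * (t `^ (b2 + 1))^-1) *: (t *: u).
  by rewrite /w addrAC addrK addrK.
clearbody w.
have pa1 := powR_aux _ _ tp (le_trans ler01 b1g).
have pa2 := powR_aux _ _ tp b2g.
rewrite E !edotDl !edotNl !edotZl uu mulr1 -!mulrA pa1 pa2.
have h1 := ht0 t tp tt0.
have h2 := powR_split t b1 b2 tp.
have h3 := powR_ge_inv _ _ tp (le_trans tt0 t01) b1g.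
have h4 : - (`|a5| * t `^ (- b2)) <= a5 * t `^ (- b2).
  rewrite -mulNr ler_wpM2r ?powR_ge0 //; rewrite lerNl -normrN; exact: ler_norm.
have h5 : `|a5| * t `^ (- b2) <= a4 / 2 * t `^ (- b1).
  rewrite h2 mulrCA mulrC ler_wpM2r ?powR_ge0 // mulrC //.
have h6 : c * t^-1 <= a4 / 2 * t `^ (- b1).
  apply: ler_pM => //; [exact: ltW | by rewrite invr_ge0 ltW].
lra.
Qed.

Lemma ray_bound (t0 : R) (u : 'rV[R]_d) (t : R) :
  (forall t, 0 < t -> t <= t0 -> `|a5| * t `^ (b1 - b2) <= a4 / 2) ->
  t0 <= 1 -> enorm u = 1 -> 0 < t -> t <= t0 ->
  G (t0 *: u) + c * ln t0 - a6 * t0 <= G (t *: u) + c * ln t - a6 * t.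
Proof.
move=> ht0 t01 hu tp tt0.
have u0 : u != 0.
  apply/negP => /eqP u0; move: hu; rewrite u0 /enorm /edot big1 => [|k _].
    by rewrite sqrtr0 => /eqP; rewrite eq_sym oner_eq0.
  by rewrite mxE mul0r.
pose f := fun s : R => G (s *: u) + c * ln s - a6 * s.
pose df := fun s : R => edot (grad G (s *: u)) u + c * s^-1 - a6.
have fd : forall x : R, 0 < x -> is_derive x 1 f (df x).
  move=> x xp.
  have q0 : x *: u != 0 by rewrite scaler_eq0 negb_or gt_eqF.
  have h1 := is_derive_ray _ _ _ (dG _ q0).
  have h2 : is_derive x 1 (@ln R) x^-1 := is_derive1_ln xp.
  have h3 := is_deriveB (is_deriveD h1 (is_deriveZ c h2)) (is_deriveZ a6 (is_derive_id x (1:R))).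
  move: h3; rewrite /f /df => H; apply: (is_derive_eq H); by rewrite [a6%:A]mulr1.
have [xi xin E] : exists2 xi, xi \in `[t, t0]%R & f t0 - f t = df xi * (t0 - t).
  apply: MVT_segment => //.
    move=> x; rewrite in_itv /= => /andP[tx _]; apply: fd; exact: lt_trans tx.
  apply: derivable_within_continuous => x; rewrite in_itv /= => /andP[tx _].
  by case: (fd x (lt_le_trans tp tx)).
move: xin; rewrite in_itv /= => /andP[txi xit0].
have xip : 0 < xi := lt_le_trans tp txi.
have := grad_bound _ _ _ ht0 t01 hu xip xit0.
have : df xi <= 0.
  rewrite /df; have := grad_bound _ _ _ ht0 t01 hu xip xit0; lra.
move=> hdf _.
have : f t0 - f t <= 0 by rewrite E; apply: mulr_le0_ge0 => //; lra.
rewrite /f; lra.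
Qed.

Lemma G_lb : exists K, forall q : 'rV[R]_d, q != 0 ->
  - c * ln (enorm q) - K - a1 * enorm q <= G q.
Proof.
have e0 : 0 < b1 - b2 by rewrite subr_gt0.
have [t0 [t0p t01 ht0]] := t0_exists a4 a5 (b1 - b2) a4p e0.
exists (a1 * (1 + t0 + t0 `^ (- b1)) - c * ln t0 + a6 * t0).
move=> q q0.
have tp := enorm_gt0 _ q0.
set t := enorm q in tp *.
have a1t : 0 <= a1 * t by apply: mulr_ge0; apply: ltW.
have a1t0 : 0 <= a1 * t0 by apply: mulr_ge0; apply: ltW.
have a6t0 : 0 <= a6 * t0 by apply: mulr_ge0; apply: ltW.
case: (leP t t0) => [tt0 | t0t].
- pose u := t^-1 *: q.
  have hu : enorm u = 1.
    by rewrite /u enormZ ger0_norm ?invr_ge0 ?(ltW tp) // mulVf // gt_eqF.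
  have qu : q = t *: u by rewrite /u scalerA mulfV ?gt_eqF // scale1r.
  have := ray_bound _ _ _ ht0 t01 hu tp tt0.
  have u0 : t0 *: u != 0.
    apply/negP => /eqP h; have := f_equal (@enorm R d) h.
    rewrite enormZ hu mulr1 (gtr0_norm t0p) => h'.
    have : enorm (0 : 'rV[R]_d) = 0.
      by rewrite /enorm /edot big1 ?sqrtr0 // => k _; rewrite mxE mul0r.
    move=> h0; move: t0p; rewrite h' h0 ltxx //.
  have hb := Gb _ u0.
  rewrite enormZ hu mulr1 (gtr0_norm t0p) in hb.
  have := ler_norm (- G (t0 *: u)); rewrite normrN => hb2.
  have a6t : 0 <= a6 * t by apply: mulr_ge0; apply: ltW.
  rewrite -qu; lra.
- have hb := Gb _ q0; rewrite -/t in hb.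
  have h1 := powR_neg_anti _ _ _ t0p (ltW t0t) (le_trans ler01 b1g).
  have h2 : a1 * t `^ (- b1) <= a1 * t0 `^ (- b1) by apply: ler_wpM2l => //; apply: ltW.
  have h3 : ln t0 <= ln t by rewrite ler_ln ?posrE //; apply: ltW.
  have h4 : c * ln t0 <= c * ln t by apply: ler_wpM2l => //; apply: ltW.
  have := ler_norm (- G q); rewrite normrN => hb2.
  rewrite mulrDr mulrDr mulr1 in hb.
  rewrite mulrDr mulrDr mulr1; lra.
Qed.

End GL.

Section UL.
Context {R : realType} {d : nat}.

Lemma U_lb (U : 'rV[R]_d -> R) (a1 lam : R) : 0 < a1 -> 1 <= lam ->
  (forall q, 1 <= U q) ->
  (forall q, a1^-1 * enorm q `^ (lam + 1) - a1 <= `|U q|) ->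
  forall A, 0 <= A -> exists B, 0 <= B /\ forall q, A * enorm q - B <= U q.
Proof.
move=> a1p lam1 U1 Ub A A0.
exists (a1 * A ^+ 2 / 4 + a1 + A); split.
  apply: addr_ge0 => //.
  apply: addr_ge0; last exact: ltW.
  by apply: divr_ge0 => //; apply: mulr_ge0; [exact: ltW | exact: sqr_ge0].
move=> q; have x0 := enorm_ge0 q; set x := enorm q in x0 *.
have hU := U1 q; have hUb := Ub q; rewrite ger0_norm in hUb; last exact: le_trans ler01 hU.
have k0 : 0 <= a1 * A ^+ 2 / 4.
  by apply: divr_ge0 => //; apply: mulr_ge0; [exact: ltW | exact: sqr_ge0].
case: (leP x 1) => [x1 | x1].
  have : A * x <= A by rewrite -{2}(mulr1 A); apply: ler_wpM2l.
  lra.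
have hx2 : x ^+ 2 <= x `^ (lam + 1).
  rewrite -powR_mulrn; last exact: x0.
  have h : 1 <= x by exact: ltW.
  have h2 : 2%:R <= lam + 1 by lra.
  by have := ler_powR h h2.
have hy : a1^-1 * x ^+ 2 <= a1^-1 * x `^ (lam + 1).
  by apply: ler_wpM2l => //; rewrite invr_ge0 ltW.
set y := a1^-1 * x ^+ 2 in hy.
have ay : a1 * y = x ^+ 2 by rewrite /y mulrA mulfV ?gt_eqF // mul1r.
have : A * x <= y + a1 * A ^+ 2 / 4.
  rewrite -(ler_pM2l a1p) mulrDr ay.
  have := sqr_ge0 (x - a1 * A / 2).
  rewrite !expr2; move=> h.
  have e : a1 * (a1 * (A * A) / 4) = (a1 * A / 2) * (a1 * A / 2) by field.
  rewrite e; nra.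
lra.
Qed.
End UL.

Section H.
Context {R : realType}.

Lemma le_bigD1 (I : finType) (P : pred I) (F : I -> R) i0 :
  (forall i, P i -> 0 <= F i) -> P i0 -> F i0 <= \sum_(i | P i) F i.
Proof.
move=> H Pi0; rewrite (bigD1 i0) //= lerDl; apply: sumr_ge0 => i /andP[Pi _].
exact: H.
Qed.

Lemma pairs_le N (f : 'I_N -> 'I_N -> R) : (forall i j, 0 <= f i j) ->
  \sum_(i < N) \sum_(j < N | (i < j)%N) f i j <= \sum_(i < N) \sum_(j < N) f i j.
Proof.
move=> H; apply: ler_sum => i _.
rewrite [X in _ <= X](bigID (fun j : 'I_N => (i < j)%N)) /= lerDl.
by apply: sumr_ge0 => j _.
Qed.

Lemma sum_const2 N (k : R) : \sum_(i < N) \sum_(j < N) k = k * N%:R * N%:R.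
Proof.
under eq_bigr do rewrite sumr_const card_ord.
by rewrite sumr_const card_ord !mulr_natr.
Qed.

Lemma sum_pair2 N (x : 'I_N -> R) :
  \sum_(i < N) \sum_(j < N) (x i + x j) = 2 * N%:R * \sum_(i < N) x i.
Proof.
under eq_bigr do rewrite big_split /= sumr_const card_ord.
rewrite big_split /= sumr_const card_ord sumrMnl.
rewrite -mulrA mulr_natl -mulr_natl -mulrnDl mulr2n mulr_natl.
by rewrite mulrDl !mul1r mulrnDl.
Qed.

Lemma pair_max_le n (f : 'I_n.+2 -> 'I_n.+2 -> R) Y :
  (forall i j : 'I_n.+2, (i < j)%N -> f i j <= Y) -> pair_max f <= Y.
Proof.
move=> H; rewrite /pair_max /=.
apply: (big_ind (fun x => x <= Y)).
- exact: H.
- by move=> x y hx hy; rewrite ge_max hx hy.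
move=> i _; apply: (big_ind (fun x => x <= Y)).
- exact: H.
- by move=> x y hx hy; rewrite ge_max hx hy.
by move=> j ij; apply: H.
Qed.
End H.

Lemma sum2_lin {R : realType} N (P : 'I_N -> 'I_N -> bool) (f g h : 'I_N -> 'I_N -> R) (a b e : R) :
  \sum_(i < N) \sum_(j < N | P i j) (a * f i j + b * g i j + e * h i j) =
  a * (\sum_(i < N) \sum_(j < N | P i j) f i j) +
  b * (\sum_(i < N) \sum_(j < N | P i j) g i j) +
  e * (\sum_(i < N) \sum_(j < N | P i j) h i j).
Proof.
rewrite !mulr_sumr -!big_split; apply: eq_bigr => i _.
by rewrite !mulr_sumr -!big_split.
Qed.

Theorem lemmaA3 (R : realType) (d N : nat) (U G : 'rV[R]_d -> R)
  (a1 lam a2 a3 b1 b2 a4 a5 a6 : R) :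
  (2 <= N)%N ->
  assumption_U U a1 lam a2 a3 ->
  assumption_G1 G a1 b1 b2 a4 a5 a6 ->
  (forall q : 'I_N -> 'rV[R]_d, config_D q -> 1 <= energy U G q) ->
  exists cG CG : R, 0 < cG /\ 0 < CG /\
    forall q : 'I_N -> 'rV[R]_d, config_D q ->
      CG * energy U G q >=
        \sum_(i < N) enorm (q i)
        - cG * \sum_(i < N) \sum_(j < N | (i < j)%N) ln (enorm (q i - q j))
      /\
      \sum_(i < N) enorm (q i)
        - cG * \sum_(i < N) \sum_(j < N | (i < j)%N) ln (enorm (q i - q j))
        >= cG * \sum_(i < N) enorm (q i)
           + cG * pair_max (fun i j => - ln (enorm (q i - q j))).
Proof.
move=> N2 [[sU U1 [a1p lam1 a2p a3p]] Ub] [[sG _ _ _ [[_ b1g b2g b21] [a4p a6p]]] Gbs] Epos.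
have [dG0 _] := sG 1%N.
have dG : forall x : 'rV[R]_d, x != 0 -> differentiable G x by move=> x hx; exact: dG0.
have Gb : forall q : 'rV[R]_d, q != 0 ->
    `|G q| <= a1 * (1 + enorm q + enorm q `^ (- b1)).
  by move=> q hq; have [h _ _] := Gbs q hq.
have Gg : forall q : 'rV[R]_d, q != 0 ->
    enorm (grad G q + (a4 * (enorm q `^ (b1 + 1))^-1) *: q
                + (a5 * (enorm q `^ (b2 + 1))^-1) *: q) <= a6.
  by move=> q hq; have [_ _ h] := Gbs q hq.
have Ulb : forall q, a1^-1 * enorm q `^ (lam + 1) - a1 <= `|U q|.
  by move=> q; have [h _ _ _] := Ub q.
set Nr : R := N%:R.
have Nr0 : 0 <= Nr by rewrite /Nr ler0n.
pose c : R := Num.min (a4 / 2) ((4 * Nr + 1)^-1).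
have N41 : 0 < 4 * Nr + 1 by lra.
have cp : 0 < c by rewrite /c lt_min divr_gt0 // invr_gt0.
have ca4 : c <= a4 / 2 by rewrite /c ge_min lexx.
have cN : c * (4 * Nr + 1) <= 1.
  have : c <= (4 * Nr + 1)^-1 by rewrite /c ge_min lexx orbT.
  by rewrite -(ler_pM2r N41) mulVf ?gt_eqF.
have [K HK] := G_lb R d G a1 b1 b2 a4 a5 a6 c dG Gb Gg a1p b1g b2g b21 a4p a6p cp ca4.
pose Kp := Num.max K 0.
have Kp0 : 0 <= Kp by rewrite /Kp le_max lexx orbT.
have HK' : forall q : 'rV[R]_d, q != 0 ->
    - c * ln (enorm q) - Kp - a1 * enorm q <= G q.
  move=> q hq; have := HK q hq; have : K <= Kp by rewrite /Kp le_max lexx.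
  lra.
pose A := 1 + 4 * Nr * a1.
have A0 : 0 <= A by have := mulr_ge0 Nr0 (ltW a1p); rewrite /A; lra.
have [B [B0 HB]] := U_lb U a1 lam a1p lam1 U1 Ulb A A0.
pose D := B * Nr + Kp * Nr * Nr.
have D0 : 0 <= D by rewrite /D; apply: addr_ge0; apply: mulr_ge0 => //; apply: mulr_ge0.
exists c, (1 + D); split => //; split; first lra.
move=> q qD.
have nz : forall i j : 'I_N, (i < j)%N -> q i - q j != 0.
  move=> i j ij; rewrite subr_eq0; apply: qD; apply/eqP => e; move: ij; rewrite e ltnn //.
set S := \sum_(i < N) enorm (q i).
set Sln := \sum_(i < N) \sum_(j < N | (i < j)%N) ln (enorm (q i - q j)).
have S0 : 0 <= S by apply: sumr_ge0 => k _; exact: enorm_ge0.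
set T3 := \sum_(i < N) \sum_(j < N | (i < j)%N) (enorm (q i) + enorm (q j)).
have hT3 : T3 <= 2 * Nr * S.
  rewrite /S -sum_pair2; apply: pairs_le => i j.
  by apply: addr_ge0; exact: enorm_ge0.
set T2 := \sum_(i < N) \sum_(j < N | (i < j)%N) enorm (q i - q j).
have hT2 : T2 <= 2 * T3.
  have -> : 2 * T3 = \sum_(i < N) \sum_(j < N | (i < j)%N) 2 * (enorm (q i) + enorm (q j)).
    by rewrite /T3 mulr_sumr; apply: eq_bigr => i _; rewrite mulr_sumr.
  apply: ler_sum => i _; apply: ler_sum => j _; exact: enormB_le.
set T1 := \sum_(i < N) \sum_(j < N | (i < j)%N) Kp.
have hT1 : T1 <= Kp * Nr * Nr by rewrite /Nr -sum_const2; apply: pairs_le.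
split.
-
  have E1 : A * S - B * Nr <= \sum_(i < N) U (q i).
    have -> : A * S - B * Nr = \sum_(i < N) (A * enorm (q i) - B).
      rewrite sumrB sumr_const card_ord mulr_natr /S mulr_sumr //.
    by apply: ler_sum => i _; apply: HB.
  have E2 : - c * Sln + (-1) * T1 + (- a1) * T2 <=
      \sum_(i < N) \sum_(j < N | (i < j)%N) G (q i - q j).
    rewrite /Sln /T1 /T2 -sum2_lin; apply: ler_sum => i _; apply: ler_sum => j ij.
    have := HK' _ (nz i j ij); lra.
  have hE : S - c * Sln - D <= energy U G q.
    rewrite /energy -/S; have := ltW a1p => a10.
    have h1 : a1 * T2 <= a1 * (2 * (2 * Nr * S)).
      apply: ler_wpM2l => //; lra.
    rewrite /A in E1; rewrite /D; nra.
  have E1' := Epos q qD.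
  have : D * 1 <= D * energy U G q by apply: ler_wpM2l.
  rewrite -/S in hE *; lra.
-
  set pm := pair_max _.
  set h := fun i j : 'I_N => - ln (enorm (q i - q j)) + 2 * (enorm (q i) + enorm (q j)).
  have h0 : forall i j : 'I_N, (i < j)%N -> 0 <= h i j.
    move=> i j ij; rewrite /h.
    have := ln_sublinear (enorm_gt0 _ (nz i j ij)).
    have := enormB_le (q i) (q j); lra.
  have Hsum : \sum_(i < N) \sum_(j < N | (i < j)%N) h i j = - Sln + 2 * T3.
    have := @sum2_lin R N (fun i j => (i < j)%N) (fun i j => ln (enorm (q i - q j)))
      (fun i j => enorm (q i) + enorm (q j)) (fun _ _ => 0) (-1) 2 0.
    rewrite !mul0r !addr0 -/Sln -/T3 mulN1r => <-.
    by apply: eq_bigr => i _; apply: eq_bigr => j _; rewrite /h addr0 mulN1r.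
  have key : forall i0 j0 : 'I_N, (i0 < j0)%N ->
      - ln (enorm (q i0 - q j0)) <= - Sln + 4 * Nr * S.
    move=> i0 j0 ij0.
    have s1 : h i0 j0 <= \sum_(j < N | (i0 < j)%N) h i0 j.
      by apply: (le_bigD1 _ (fun j : 'I_N => (i0 < j)%N) (fun j => h i0 j) j0) => // j; apply: h0.
    have s2 : \sum_(j < N | (i0 < j)%N) h i0 j <= \sum_(i < N) \sum_(j < N | (i < j)%N) h i j.
      rewrite [X in _ <= X](bigD1 i0) //= lerDl; apply: sumr_ge0 => i _.
      by apply: sumr_ge0 => j; apply: h0.
    have : 0 <= enorm (q i0) + enorm (q j0) by apply: addr_ge0; exact: enorm_ge0.
    move: s1 s2; rewrite Hsum /h; lra.
  destruct N as [|[|n]]; [by [] | by [] |].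
  have pmle : pm <= (S - c * Sln - c * S) / c.
    rewrite /pm; apply: pair_max_le => i j ij.
    rewrite ler_pdivlMr //.
    have := key i j ij.
    have : c * S * (4 * Nr + 1) <= S by have := mulr_ge0 S0 (ltW cp); nra.
    move=> h1 h2.
    have : c * - ln (enorm (q i - q j)) <= c * (- Sln + 4 * Nr * S) by apply: ler_wpM2l => //; exact: ltW.
    lra.
  have : c * pm <= c * ((S - c * Sln - c * S) / c) by apply: ler_wpM2l => //; exact: ltW.
  rewrite mulrCA mulfV ?gt_eqF // mulr1; lra.
Qed.
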